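(* Let $\Sigma$ be a fan in $\Lambda_{\mathbb Q}$ with support $|\Sigma|$ contained in the positive Weyl chamber $\Lambda^+_{\mathbb Q}$. If $W\Sigma$ has convex support, then for every $x\in|\Sigma|$ and every face $F$ of $\Lambda^+_{\mathbb Q}$, the orthogonal projection of $x$ onto the linear span of $F$ is also contained in $|\Sigma|$.
   Context: $G$ is a split reductive group with maximal torus $T$, cocharacter lattice $\Lambda$, Weyl group $W$ acting on $\Lambda_{\mathbb Q}$, and positive Weyl chamber $\Lambda^+_{\mathbb Q}$. Orthogonal projection is taken with respect to a $W$-invariant inner product (e.g. for a wall, the projection onto the hyperplane annihilated by a simple root $\alpha_i$ is $x\mapsto x-\frac{\alpha_i\cdot x}{2}\alpha_i^\vee$). $W\Sigma$ is the fan of cones $w\sigma$, $w\in W$, $\sigma\in\Sigma$. *)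

(* Defs.v *)
(* Lambda_Q = 'rV[rat]_n (cocharacter lattice Lambda = Z^n),
   characters / roots are also encoded as row vectors, paired with the
   standard dot product. *)
From HB Require Import structures.
From mathcomp Require Import all_boot all_order all_algebra.
Set Implicit Arguments. Unset Strict Implicit. Unset Printing Implicit Defensive.
Import Order.TTheory GRing.Theory Num.Theory.
Local Open Scope ring_scope.

Section Defs.
Variable n : nat.
Notation V := 'rV[rat]_n.

Definition pair (phi x : V) : rat := \sum_(j < n) phi ord0 j * x ord0 j.

Definition integral (v : V) : Prop := forall j, v ord0 j \is a Num.int.

Definition srefl (r : nat) (alpha coalpha : 'I_r -> V) (i : 'I_r) (x : V) : V :=
  x - pair (alpha i) x *: coalpha i.

Definition wact (r : nat) (alpha coalpha : 'I_r -> V) (w : seq 'I_r) (x : V) : V :=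
  foldr (srefl alpha coalpha) x w.

(* Simple roots / simple coroots of the root datum of a split reductive group:
   integral on the lattice Z^n, Cartan matrix conditions, and finite Weyl group. *)
Definition reductive_root_datum (r : nat) (alpha coalpha : 'I_r -> V) : Prop :=
  [/\ forall i, integral (alpha i) /\ integral (coalpha i),
      forall i, pair (alpha i) (coalpha i) = 2,
      forall i j, i != j -> pair (alpha i) (coalpha j) <= 0,
      forall i j, pair (alpha i) (coalpha j) = 0 <-> pair (alpha j) (coalpha i) = 0
    & exists ws : seq (seq 'I_r), forall w : seq 'I_r,
        exists2 w', w' \in ws & forall x, wact alpha coalpha w x = wact alpha coalpha w' x].

Definition ip (B : 'M[rat]_n) (x y : V) : rat := (x *m B *m y^T) ord0 ord0.

Definition W_invariant_inner_product (r : nat) (alpha coalpha : 'I_r -> V)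
  (B : 'M[rat]_n) : Prop :=
  [/\ B^T = B,
      forall x : V, x != 0 -> 0 < ip B x x
    & forall i x y, ip B (srefl alpha coalpha i x) (srefl alpha coalpha i y) = ip B x y].

Definition chamber (r : nat) (alpha : 'I_r -> V) (x : V) : Prop :=
  forall i, 0 <= pair (alpha i) x.

Definition is_face (C F : V -> Prop) : Prop :=
  exists phi : V, (forall x, C x -> 0 <= pair phi x) /\
                  (forall x, F x <-> C x /\ pair phi x = 0).

Definition lin_span (S : V -> Prop) (x : V) : Prop :=
  exists (m : nat) (c : 'I_m -> rat) (v : 'I_m -> V),
    (forall k, S (v k)) /\ x = \sum_(k < m) c k *: v k.

Definition orth_proj (B : 'M[rat]_n) (L : V -> Prop) (x p : V) : Prop :=
  L p /\ forall y, L y -> ip B (x - p) y = 0.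

Definition cone_gen (g : seq V) (x : V) : Prop :=
  exists c : 'I_(size g) -> rat, (forall k, 0 <= c k) /\
    x = \sum_(k < size g) c k *: g`_k.

Definition strongly_convex (C : V -> Prop) : Prop :=
  forall x, C x -> C (- x) -> x = 0.

Definition is_fan (Sigma : seq (seq V)) : Prop :=
  [/\ forall s, s \in Sigma -> strongly_convex (cone_gen s),
      forall s F, s \in Sigma -> is_face (cone_gen s) F ->
        exists2 t, t \in Sigma & forall x, F x <-> cone_gen t x
    & forall s t, s \in Sigma -> t \in Sigma ->
        is_face (cone_gen s) (fun x => cone_gen s x /\ cone_gen t x) /\
        is_face (cone_gen t) (fun x => cone_gen s x /\ cone_gen t x)].

Definition fan_support (Sigma : seq (seq V)) (x : V) : Prop :=
  exists2 s, s \in Sigma & cone_gen s x.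

Definition W_support (r : nat) (alpha coalpha : 'I_r -> V) (Sigma : seq (seq V))
  (x : V) : Prop :=
  exists w : seq 'I_r, exists2 y, fan_support Sigma y & x = wact alpha coalpha w y.

Definition convex (S : V -> Prop) : Prop :=
  forall a b (t : rat), 0 <= t <= 1 -> S a -> S b -> S (t *: a + (1 - t) *: b).

End Defs.

(* Main.v *)
Require Import Defs.
From HB Require Import structures.
From mathcomp Require Import all_boot all_order all_algebra.
From mathcomp Require Import ring lra zify.
From Stdlib Require Import Classical ClassicalEpsilon.
Set Implicit Arguments. Unset Strict Implicit. Unset Printing Implicit Defensive.
Import Order.TTheory GRing.Theory Num.Theory.
Local Open Scope ring_scope.

Section Newman.
Variables (T : Type) (step : T -> T -> Prop) (orb : T -> Prop) (mu : T -> nat).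
Inductive star : T -> T -> Prop :=
| star_refl u : star u u
| star_step u v w : step u v -> star v w -> star u w.
Hypothesis Hdec : forall u v, orb u -> step u v -> orb v /\ (mu v < mu u)%N.
Hypothesis HLC : forall u v1 v2, orb u -> step u v1 -> step u v2 ->
  exists z, star v1 z /\ star v2 z.
Definition NF u := forall v, ~ step u v.

Lemma star_trans u v w : star u v -> star v w -> star u w.
Proof. elim=> // a b c Hab _ IH /IH; exact: star_step. Qed.

Lemma star_orb u v : orb u -> star u v -> orb v.
Proof. move=> Hu H; elim: H Hu => // a b c Hab _ IH Ha; apply: IH; exact: (Hdec Ha Hab).1. Qed.

Lemma star_NF u v : NF u -> star u v -> v = u.
Proof. move=> Hu H; case: H Hu => // a b c Hab _ Ha; case: (Ha _ Hab). Qed.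

Lemma nf_ex u : orb u -> exists z, star u z /\ NF z.
Proof.
move=> Hu; have [k Hk] : exists k, (mu u <= k)%N by exists (mu u).
elim: k u Hu Hk => [|k IH] u Hu Hk.
  case: (classic (NF u)) => [H|H]; first by exists u; split=> //; constructor.
  have [v Hv] : exists v, step u v.
    by apply: NNPP => Hn; apply: H => v Hv; apply: Hn; exists v.
  by have [_] := Hdec Hu Hv; rewrite ltnNge (leq_trans Hk).
case: (classic (NF u)) => [H|H]; first by exists u; split=> //; constructor.
have [v Hv] : exists v, step u v.
  by apply: NNPP => Hn; apply: H => v Hv; apply: Hn; exists v.
have [Ov Lv] := Hdec Hu Hv.
have [z [Hz1 Hz2]] := IH v Ov (leq_trans Lv Hk).
by exists z; split=> //; apply: star_step Hz1.
Qed.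

Lemma star_inv u z : star u z -> z = u \/ exists v, step u v /\ star v z.
Proof. by case=> [a|a b c Hab Hb]; [left|right; exists b]. Qed.

Lemma newman u : orb u -> forall z1 z2, star u z1 -> star u z2 -> NF z1 -> NF z2 -> z1 = z2.
Proof.
move=> Hu; have [k Hk] : exists k, (mu u <= k)%N by exists (mu u).
elim: k u Hu Hk => [|k IH] u Hu Hk z1 z2 H1 H2 N1 N2.
  case: (star_inv H1) => [E1|[b [Hab Hb]]]; first by subst z1; rewrite (star_NF N1 H2).
  by have [_] := Hdec Hu Hab; rewrite ltnNge (leq_trans Hk).
case: (star_inv H1) => [E1|[b [Hab Hb]]]; first by subst z1; rewrite (star_NF N1 H2).
case: (star_inv H2) => [E2|[b2 [Hab2 Hb2]]]; first by rewrite E2 in N2; case: (N2 _ Hab).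
have [Ob Lb] := Hdec Hu Hab; have [Ob2 Lb2] := Hdec Hu Hab2.
have [z [Hz1 Hz2]] := HLC Hu Hab Hab2.
have Oz : orb z by apply: star_orb Hz1.
have [y [Hy1 Hy2]] := nf_ex Oz.
have e1 : z1 = y := IH b Ob (leq_trans Lb Hk) z1 y Hb (star_trans Hz1 Hy1) N1 Hy2.
have e2 : z2 = y := IH b2 Ob2 (leq_trans Lb2 Hk) z2 y Hb2 (star_trans Hz2 Hy1) N2 Hy2.
by rewrite e1 e2.
Qed.
End Newman.

Section Basic.
Variable n : nat.
Implicit Types (phi x y z : 'rV[rat]_n).

Lemma pairE phi x : pair phi x = (x *m phi^T) ord0 ord0.
Proof. by rewrite /pair !mxE; apply: eq_bigr => j _; rewrite !mxE mulrC. Qed.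

Lemma pairD phi x y : pair phi (x + y) = pair phi x + pair phi y.
Proof. by rewrite !pairE mulmxDl mxE. Qed.
Lemma pairZ phi c x : pair phi (c *: x) = c * pair phi x.
Proof. by rewrite !pairE -scalemxAl mxE. Qed.
Lemma pairN phi x : pair phi (- x) = - pair phi x.
Proof. by rewrite !pairE mulNmx mxE. Qed.
Lemma pairB phi x y : pair phi (x - y) = pair phi x - pair phi y.
Proof. by rewrite pairD pairN. Qed.
Lemma pair0 phi : pair phi 0 = 0.
Proof. by rewrite pairE mul0mx mxE. Qed.
Lemma pair_sum phi I (s : seq I) (P : pred I) (F : I -> 'rV[rat]_n) :
  pair phi (\sum_(i <- s | P i) F i) = \sum_(i <- s | P i) pair phi (F i).
Proof.
elim/big_rec2: _ => [|i a b _ H]; first by rewrite pair0.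
by rewrite pairD H.
Qed.
Lemma pair_int phi x : integral phi -> integral x -> pair phi x \is a Num.int.
Proof.
move=> Hp Hx; rewrite /pair; apply: rpred_sum => j _; apply: rpredM; [exact: Hp|exact: Hx].
Qed.

Variable B : 'M[rat]_n.
Lemma ipDl x y z : ip B (x + y) z = ip B x z + ip B y z.
Proof. by rewrite /ip !mulmxDl mxE. Qed.
Lemma ipZl c x z : ip B (c *: x) z = c * ip B x z.
Proof. by rewrite /ip -!scalemxAl mxE. Qed.
Lemma ipNl x z : ip B (- x) z = - ip B x z.
Proof. by rewrite /ip !mulNmx mxE. Qed.
Lemma ipBl x y z : ip B (x - y) z = ip B x z - ip B y z.
Proof. by rewrite ipDl ipNl. Qed.
Lemma ip0l z : ip B 0 z = 0.
Proof. by rewrite /ip !mul0mx mxE. Qed.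
Lemma ip_suml I (s : seq I) (P : pred I) (F : I -> 'rV[rat]_n) z :
  ip B (\sum_(i <- s | P i) F i) z = \sum_(i <- s | P i) ip B (F i) z.
Proof.
elim/big_rec2: _ => [|i a b _ H]; first by rewrite ip0l.
by rewrite ipDl H.
Qed.
Hypothesis HBs : B^T = B.
Lemma ipC x y : ip B x y = ip B y x.
Proof.
rewrite /ip.
have H : forall M : 'M[rat]_1, M ord0 ord0 = M^T ord0 ord0 by move=> M; rewrite mxE.
by rewrite H !trmx_mul trmxK HBs mulmxA.
Qed.
Lemma ipDr x y z : ip B z (x + y) = ip B z x + ip B z y.
Proof. by rewrite ipC ipDl !(ipC z). Qed.
Lemma ipZr c x z : ip B z (c *: x) = c * ip B z x.
Proof. by rewrite ipC ipZl ipC. Qed.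
Lemma ipNr x z : ip B z (- x) = - ip B z x.
Proof. by rewrite ipC ipNl ipC. Qed.
Lemma ipBr x y z : ip B z (x - y) = ip B z x - ip B z y.
Proof. by rewrite ipC ipBl !(ipC z). Qed.
End Basic.

Lemma int_cases (zA zB : int) : zA <= 0 -> zB <= 0 -> zA * zB < 4 -> (zA = 0 <-> zB = 0) ->
 (zA = 0 /\ zB = 0) \/ (zA = -1 /\ zB = -1) \/ (zA = -1 /\ zB = -2) \/ (zA = -2 /\ zB = -1)
 \/ (zA = -1 /\ zB = -3) \/ (zA = -3 /\ zB = -1).
Proof. move=> h1 h2 h3 h4. nia. Qed.


Section Core.
Variables (n r : nat) (al co : 'I_r -> 'rV[rat]_n) (B : 'M[rat]_n).
Hypothesis Hdiag : forall i, pair (al i) (co i) = 2.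
Hypothesis Hoff : forall i j, i != j -> pair (al i) (co j) <= 0.
Hypothesis Hsym0 : forall i j, pair (al i) (co j) = 0 <-> pair (al j) (co i) = 0.
Hypothesis Hint : forall i j, pair (al i) (co j) \is a Num.int.
Hypothesis HBs : B^T = B.
Hypothesis HBpos : forall x : 'rV[rat]_n, x != 0 -> 0 < ip B x x.
Hypothesis HBinv : forall i x y, ip B (srefl al co i x) (srefl al co i y) = ip B x y.

Local Notation s := (srefl al co).
Local Notation V := 'rV[rat]_n.

Lemma sE i x : s i x = x - pair (al i) x *: co i. Proof. by []. Qed.
Lemma pair_s j i x : pair (al j) (s i x) = pair (al j) x - pair (al i) x * pair (al j) (co i).
Proof. by rewrite sE pairB pairZ. Qed.
Lemma ip_ge0 x : 0 <= ip B x x.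
Proof. by case: (eqVneq x 0) => [->|/HBpos/ltW//]; rewrite ip0l. Qed.
Lemma ip_eq0 x : ip B x x = 0 -> x = 0.
Proof. by case: (eqVneq x 0) => // /HBpos; rewrite lt_def => /andP[/eqP]. Qed.
Lemma co_neq0 i : co i != 0.
Proof. by apply/eqP => H; have := Hdiag i; rewrite H pair0. Qed.
Lemma Npos i : 0 < ip B (co i) (co i).
Proof. exact: HBpos (co_neq0 i). Qed.
Lemma s_co i : s i (co i) = - co i.
Proof. by rewrite sE Hdiag scaler_nat mulr2n opprD addrA subrr sub0r. Qed.
Lemma ip_co i x : ip B x (co i) = pair (al i) x * ip B (co i) (co i) / 2.
Proof.
have := HBinv i x (co i); rewrite s_co (ipNr HBs) sE ipBl ipZl => H.
move: H; move: (ip B x (co i)) (pair (al i) x) (ip B (co i) (co i)) => t a N H.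
lra.
Qed.

Lemma s_invol i x : s i (s i x) = x.
Proof.
rewrite [in LHS]sE pair_s Hdiag sE; apply/rowP => k; rewrite !mxE; ring.
Qed.

Lemma wact_cons i w x : wact al co (i :: w) x = s i (wact al co w x).
Proof. by []. Qed.
Lemma wact_cat w1 w2 x : wact al co (w1 ++ w2) x = wact al co w1 (wact al co w2 x).
Proof. by rewrite /wact foldr_cat. Qed.

Lemma ip_s_fix i x y : pair (al i) y = 0 -> ip B (s i x) y = ip B x y.
Proof.
move=> Hy; have Hsy : s i y = y by rewrite sE Hy scale0r subr0.
by rewrite -{1}Hsy HBinv.
Qed.

Lemma ip_wact_fix w x y : (forall i, i \in w -> pair (al i) y = 0) ->
  ip B (wact al co w x) y = ip B x y.
Proof.
elim: w => //= i w IH H; rewrite ip_s_fix; last by apply: H; rewrite inE eqxx.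
by apply: IH => k Hk; apply: H; rewrite inE Hk orbT.
Qed.

Definition stepP (P : pred 'I_r) (u v : V) := exists i, [/\ P i, pair (al i) u < 0 & v = s i u].

Fixpoint pathok (a b A Bc : rat) (l : seq bool) (p q : rat) : Prop :=
  if l is c :: l' then
    (if c then a + 2 * p + A * q < 0 /\ pathok a b A Bc l' (- p - a - A * q) q
     else b + Bc * p + 2 * q < 0 /\ pathok a b A Bc l' p (- q - b - Bc * p))
  else True.
Fixpoint pend (a b A Bc : rat) (l : seq bool) (p q : rat) : rat * rat :=
  if l is c :: l' then
    (if c then pend a b A Bc l' (- p - a - A * q) q
     else pend a b A Bc l' p (- q - b - Bc * p))
  else (p, q).

Lemma path_star (P : pred 'I_r) i j u l : P i -> P j ->
  let a := pair (al i) u in let b := pair (al j) u in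
  let A := pair (al i) (co j) in let Bc := pair (al j) (co i) in
  forall p q, pathok a b A Bc l p q ->
  star (stepP P) (u + p *: co i + q *: co j)
    (u + (pend a b A Bc l p q).1 *: co i + (pend a b A Bc l p q).2 *: co j).
Proof.
move=> Pi Pj a b A Bc; elim: l => [|c l IH] p q /=; first by move=> _; constructor.
case: c => [][H1 H2].
  apply: star_step (IH _ _ H2); exists i; split=> //.
    by rewrite !pairD !pairZ Hdiag -/a -/A; lra.
  rewrite sE !pairD !pairZ Hdiag -/a -/A; apply/rowP => k; rewrite !mxE; ring.
apply: star_step (IH _ _ H2); exists j; split=> //.
  by rewrite !pairD !pairZ Hdiag -/b -/Bc; lra.
rewrite sE !pairD !pairZ Hdiag -/b -/Bc; apply/rowP => k; rewrite !mxE; ring.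
Qed.


Lemma contra_aux (a b A Ni Nj : rat) : a < 0 -> b < 0 -> A <= 0 -> 0 < Ni -> 0 < Nj ->
  2 * (b * Nj / 2) = A * (a * Ni / 2) -> False.
Proof. move=> ha hb hA hNi hNj H.
have h1 : 0 <= A * a * Ni by rewrite mulr_ge0 // ?mulr_le0 // ltW.
have h2 : b * Nj < 0 by rewrite pmulr_llt0.
have E : 2 * (b * Nj / 2) - A * (a * Ni / 2) = b * Nj - (A * a * Ni) / 2 by field.
move: E; rewrite H subrr; move: (b * Nj) (A * a * Ni) h1 h2 => X Y h1 h2 E.
lra.
Qed.

Lemma rank2_case (P : pred 'I_r) i j u l1 l2 : P i -> P j ->
  pathok (pair (al i) u) (pair (al j) u) (pair (al i) (co j)) (pair (al j) (co i)) l1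
    (- pair (al i) u) 0 ->
  pathok (pair (al i) u) (pair (al j) u) (pair (al i) (co j)) (pair (al j) (co i)) l2
    0 (- pair (al j) u) ->
  pend (pair (al i) u) (pair (al j) u) (pair (al i) (co j)) (pair (al j) (co i)) l1
    (- pair (al i) u) 0 =
  pend (pair (al i) u) (pair (al j) u) (pair (al i) (co j)) (pair (al j) (co i)) l2
    0 (- pair (al j) u) ->
  exists z, star (stepP P) (s i u) z /\ star (stepP P) (s j u) z.
Proof.
move=> Pi Pj H1 H2 He.
have Ei : s i u = u + (- pair (al i) u) *: co i + 0 *: co j.
  by rewrite sE scale0r addr0 scaleNr.
have Ej : s j u = u + 0 *: co i + (- pair (al j) u) *: co j.
  by rewrite sE scale0r addr0 scaleNr.
have S1 := path_star Pi Pj H1; have S2 := path_star Pi Pj H2.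
rewrite He in S1.
by eexists; split; [rewrite Ei; exact: S1 | rewrite Ej; exact: S2].
Qed.

Lemma rank2 (P : pred 'I_r) i j u : P i -> P j -> i != j ->
  pair (al i) u < 0 -> pair (al j) u < 0 ->
  exists z, star (stepP P) (s i u) z /\ star (stepP P) (s j u) z.
Proof.
move=> Pi Pj nij ha hb.
have hA : pair (al i) (co j) <= 0 := Hoff nij.
have hB : pair (al j) (co i) <= 0 by apply: Hoff; rewrite eq_sym.
have h4 : pair (al i) (co j) * pair (al j) (co i) < 4.
  rewrite ltNge; apply/negP => H4.
  pose v := 2 *: co j - pair (al i) (co j) *: co i.
  have Hvi : pair (al i) v = 0.
    by rewrite /v pairB !pairZ Hdiag mulrC subrr.
  have Hvj : pair (al j) v = 4 - pair (al i) (co j) * pair (al j) (co i).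
    by rewrite /v pairB !pairZ Hdiag; ring.
  have Hv : ip B v v = (4 - pair (al i) (co j) * pair (al j) (co i)) * ip B (co j) (co j).
    by rewrite {2}/v (ipBr HBs) !(ipZr HBs) (ip_co j v) (ip_co i v) Hvi Hvj; field.
  have v0 : v = 0.
    apply: ip_eq0; apply: le_anti; rewrite ip_ge0 andbT Hv.
    by rewrite pmulr_lle0 ?Npos // subr_le0.
  have E2 : 2 *: co j = pair (al i) (co j) *: co i by apply/eqP; rewrite -subr_eq0 -/v v0.
  have : ip B u (2 *: co j) = ip B u (pair (al i) (co j) *: co i) by rewrite E2.
  rewrite !(ipZr HBs) (ip_co j u) (ip_co i u).
  by apply: contra_aux ha hb hA (Npos i) (Npos j).
have /intrP[zA HA] := Hint i j; have /intrP[zB HB] := Hint j i.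
have h1 : zA <= 0 by rewrite -(ler_int rat) -HA.
have h2 : zB <= 0 by rewrite -(ler_int rat) -HB.
have h3 : zA * zB < 4 by rewrite -(ltr_int rat) intrM -HA -HB.
have h5 : zA = 0 <-> zB = 0.
  split=> H.
    by apply/eqP; rewrite -(eqr_int rat) -HB; apply/eqP/(Hsym0 i j).1; rewrite HA H.
  by apply/eqP; rewrite -(eqr_int rat) -HA; apply/eqP/(Hsym0 i j).2; rewrite HB H.
have : (zA = 0 /\ zB = 0) \/ (zA = -1 /\ zB = -1) \/ (zA = -1 /\ zB = -2) \/ (zA = -2 /\ zB = -1)
 \/ (zA = -1 /\ zB = -3) \/ (zA = -3 /\ zB = -1) by apply: int_cases.
case=> [[eA eB]|[[eA eB]|[[eA eB]|[[eA eB]|[[eA eB]|[eA eB]]]]]];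
  move: HA HB; rewrite eA eB => HA HB.
- apply: (@rank2_case P i j u [:: false] [:: true]) => //; rewrite HA HB /=.
  + by repeat split; lra.
  + by repeat split; lra.
  + by congr (_, _); ring.
- apply: (@rank2_case P i j u [:: false; true] [:: true; false]) => //; rewrite HA HB /=.
  + by repeat split; lra.
  + by repeat split; lra.
  + by congr (_, _); ring.
- apply: (@rank2_case P i j u [:: false; true; false] [:: true; false; true]) => //;
    rewrite HA HB /=.
  + by repeat split; lra.
  + by repeat split; lra.
  + by congr (_, _); ring.
- apply: (@rank2_case P i j u [:: false; true; false] [:: true; false; true]) => //;
    rewrite HA HB /=.
  + by repeat split; lra.
  + by repeat split; lra.
  + by congr (_, _); ring.
- apply: (@rank2_case P i j u [:: false; true; false; true; false]
     [:: true; false; true; false; true]) => //; rewrite HA HB /=.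
  + by repeat split; lra.
  + by repeat split; lra.
  + by congr (_, _); ring.
- apply: (@rank2_case P i j u [:: false; true; false; true; false]
     [:: true; false; true; false; true]) => //; rewrite HA HB /=.
  + by repeat split; lra.
  + by repeat split; lra.
  + by congr (_, _); ring.
Qed.
End Core.

Definition pb (P : Prop) : bool := if excluded_middle_informative P then true else false.
Lemma pbP (P : Prop) : reflect P (pb P).
Proof. by rewrite /pb; case: excluded_middle_informative => H; constructor. Qed.

Lemma count_lt (T : eqType) (P Q : pred T) (l : seq T) :
  (forall z, P z -> Q z) -> (exists2 z, z \in l & Q z && ~~ P z) ->
  (count P l < count Q l)%N.
Proof.
move=> PQ; elim: l => [[z]//|a l IH [z]]; rewrite inE.
have Hab : (P a <= Q a)%N by case Pa: (P a) => //; rewrite (PQ a Pa).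
have Hc : (count P l <= count Q l)%N by apply: sub_count => y; apply: PQ.
case/orP=> [/eqP->|zl] /andP[Qz Pz] /=.
  by rewrite Qz (negbTE Pz) add0n add1n ltnS.
have := IH (ex_intro2 _ _ z zl (introT andP (conj Qz Pz))).
by move=> H; rewrite -addnS; apply: leq_add.
Qed.

Section Climb.
Variables (n r : nat) (al co : 'I_r -> 'rV[rat]_n) (B : 'M[rat]_n).
Hypothesis Hdiag : forall i, pair (al i) (co i) = 2.
Hypothesis Hoff : forall i j, i != j -> pair (al i) (co j) <= 0.
Hypothesis Hsym0 : forall i j, pair (al i) (co j) = 0 <-> pair (al j) (co i) = 0.
Hypothesis Hint : forall i j, pair (al i) (co j) \is a Num.int.
Hypothesis HBs : B^T = B.
Hypothesis HBpos : forall x : 'rV[rat]_n, x != 0 -> 0 < ip B x x.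
Hypothesis HBinv : forall i x y, ip B (srefl al co i x) (srefl al co i y) = ip B x y.
Hypothesis Hfin : exists ws : seq (seq 'I_r), forall w : seq 'I_r,
        exists2 w', w' \in ws & forall x, wact al co w x = wact al co w' x.

Local Notation s := (srefl al co).
Local Notation V := 'rV[rat]_n.
Local Notation wa := (wact al co).

Variable K : pred 'I_r.
Definition chamberK (c : V) := forall i, K i -> 0 <= pair (al i) c.
Definition E : pred 'I_r := fun i => K i && pb (exists c, chamberK c /\ 0 < pair (al i) c).

Lemma EK i : E i -> K i.
Proof. by case/andP. Qed.

Lemma NE0 k c : K k -> ~~ E k -> chamberK c -> pair (al k) c = 0.
Proof.
move=> Kk NEk Hc; apply: le_anti; rewrite Hc // andbT leNgt; apply/negP => H.
move: NEk; rewrite /E Kk /=; case: pbP => // HP _; apply: HP; exists c; split=> //.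
Qed.

Lemma NEorth k i : K k -> ~~ E k -> E i -> pair (al k) (co i) = 0.
Proof.
move=> Kk NEk /andP[Ki /pbP[c [Hc Hci]]].
pose c2 := c - (pair (al i) c / 2) *: co i.
have Hc2 : chamberK c2.
  move=> j Kj; rewrite /c2 pairB pairZ.
  case: (eqVneq j i) => [->|nji]; first by rewrite Hdiag; lra.
  have := Hoff nji; have := Hc j Kj; have := ltW Hci.
  move: (pair (al i) c) (pair (al j) c) (pair (al j) (co i)) => x y z h1 h2 h3.
  have : 0 <= x / 2 * - z by apply: mulr_ge0; lra.
  lra.
have := NE0 Kk NEk Hc2; rewrite /c2 pairB pairZ (NE0 Kk NEk Hc) sub0r => /eqP.
rewrite oppr_eq0 mulf_eq0 => /orP[|/eqP//].
by rewrite mulf_eq0 invr_eq0 (gt_eqF Hci).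
Qed.

Lemma rho_ex : exists rho, forall i, E i -> 0 < pair (al i) rho.
Proof.
suff : forall l : seq 'I_r, exists rho, chamberK rho /\ forall i, i \in l -> E i -> 0 < pair (al i) rho.
  by case/(_ (enum 'I_r)) => rho [_ H]; exists rho => i; apply: H; rewrite mem_enum.
elim=> [|i l [rho [Hr H]]]; first by exists 0; split=> // i Ki; rewrite pair0.
case Ei: (E i).
  move: (Ei) => /andP[Ki /pbP[c [Hc Hci]]].
  exists (rho + c); split.
    by move=> j Kj; rewrite pairD addr_ge0 ?Hr ?Hc.
  move=> j; rewrite inE => /orP[/eqP->|jl] Ej; rewrite pairD.
    by rewrite ltr_wpDl // Hr.
  by rewrite ltr_pwDl // ?H // Hc // EK.
exists rho; split=> // j; rewrite inE => /orP[/eqP->|jl] Ej; first by rewrite Ei in Ej.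
exact: H.
Qed.


Definition stepE := stepP al co E.
Let ipco := ip_co Hdiag HBs HBinv.
Let Npos' := Npos Hdiag HBpos.
Let rank2' := rank2 Hdiag Hoff Hsym0 Hint HBs HBpos HBinv.
Let sinv := s_invol Hdiag.

Lemma climb_NF (rho : V) (Hrho : forall i, E i -> 0 < pair (al i) rho)
  (ws : seq (seq 'I_r))
  (Hws : forall w, exists2 w', w' \in ws & forall x, wa w x = wa w' x) (u0 : V) :
  (forall u v, (exists w, u = wa w u0) -> stepE u v ->
     (exists w, v = wa w u0) /\
     (count (fun z => (ip B v rho < ip B z rho)%R) [seq wa w u0 | w <- ws] <
      count (fun z => (ip B u rho < ip B z rho)%R) [seq wa w u0 | w <- ws])%N) /\
  (forall u v1 v2, (exists w, u = wa w u0) -> stepE u v1 -> stepE u v2 ->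
     exists z, star stepE v1 z /\ star stepE v2 z).
Proof.
split.
  move=> u v [w ->] [i [Ei Hi ->]]; split; first by exists (i :: w).
  have Hinc : ip B (wa w u0) rho < ip B (s i (wa w u0)) rho.
    rewrite sE ipBl ipZl (ipC HBs (co i)) ipco.
    have := Npos' i; have := Hrho i Ei.
    move: (pair (al i) (wa w u0)) Hi (ip B (co i) (co i)) (pair (al i) rho) => a ha N b hb hN.
    have : 0 < - a * (b * N / 2) by apply: mulr_gt0; [lra|apply: mulr_gt0; [apply: mulr_gt0|]].
    lra.
  apply: count_lt => [z|]; first by move=> /(lt_trans Hinc).
  have [w' w'in Hw'] := Hws (i :: w).
  exists (s i (wa w u0)); last by rewrite Hinc ltxx.
  by apply/mapP; exists w' => //; rewrite -Hw'.
move=> u v1 v2 _ [i [Ei Hi ->]] [j [Ej Hj ->]].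
case: (eqVneq i j) => [->|nij]; first by exists (s j u); split; constructor.
exact: rank2'.
Qed.

Lemma climb_to x : (forall i, E i -> 0 <= pair (al i) x) ->
  forall w, all E w -> star stepE (wa w x) x.
Proof.
move=> Hx; have [rho Hrho] := rho_ex; have [ws Hws] := Hfin.
have [Hdec HLC] := climb_NF Hrho Hws x.
have NFx : NF stepE x.
  by move=> v [i [Ei Hi _]]; have := Hx i Ei; rewrite leNgt Hi.
elim=> [|i w IH] /=; first by constructor.
case/andP=> Ei Ew; have {IH}IH := IH Ew.
set v' := wa w x.
have Ov' : exists w0, v' = wa w0 x by exists w.
case: (ltrgtP (pair (al i) v') 0) => Hi.
- have Sv : stepE v' (s i v') by exists i.
  have Ov : exists w0, s i v' = wa w0 x by exists (i :: w).
  have [z [Hz NFz]] := nf_ex Hdec Ov.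
  have := newman Hdec HLC Ov' (star_step Sv Hz) IH NFz NFx.
  by move=> <-.
- have St : stepE (s i v') v'.
    exists i; split=> //.
    by rewrite pair_s Hdiag; lra.
  exact: star_step St IH.
- by rewrite sE Hi scale0r subr0.
Qed.


Lemma wact_filter u w : (forall k, K k -> ~~ E k -> pair (al k) u = 0) -> all K w ->
  wa w u = wa (filter E w) u /\
  (forall k, K k -> ~~ E k -> pair (al k) (wa (filter E w) u) = 0).
Proof.
move=> Hu; elim: w => [|i w IH] /=; first by split.
case/andP=> Ki Kw; have [IH1 IH2] := IH Kw.
case Ei: (E i) => /=.
  split; first by rewrite IH1.
  by move=> k Kk NEk; rewrite pair_s IH2 // (NEorth Kk NEk Ei) mulr0 subr0.
split=> //; rewrite IH1 sE IH2 ?Ei // scale0r subr0 //.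
Qed.

Lemma star_dec j u v : ~~ K j -> star stepE u v -> pair (al j) v <= pair (al j) u.
Proof.
move=> Kj; elim=> // a b c [i [Ei Hi ->]] _ IH.
apply: (le_trans IH); rewrite pair_s.
have nji : j != i by apply: contraNneq Kj => ->; exact: EK.
have := Hoff nji; move: (pair (al j) (co i)) (pair (al i) a) Hi => z y hy hz.
have : 0 <= y * z by apply: mulr_le0 => //; exact: ltW.
lra.
Qed.

Lemma dominance x w j : chamberK x -> all K w -> ~~ K j ->
  pair (al j) x <= pair (al j) (wa w x).
Proof.
move=> Hx Kw Kj.
have [-> _] := wact_filter (fun k Kk NEk => NE0 Kk NEk Hx) Kw.
apply: star_dec Kj _; apply: climb_to; last by rewrite all_filter; apply/allP => i _; apply/implyP.
by move=> i /EK; exact: Hx.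
Qed.

Lemma dom_unique y w : chamberK y -> chamberK (wa w y) -> all K w -> wa w y = y.
Proof.
move=> Hy Hq Kw.
have [E1 _] := wact_filter (fun k Kk NEk => NE0 Kk NEk Hy) Kw.
have St : star stepE (wa (filter E w) y) y.
  apply: climb_to; last by rewrite all_filter; apply/allP => i _; apply/implyP.
  by move=> i /EK; exact: Hy.
rewrite E1 in Hq *.
apply/esym; apply: star_NF St => v [i [Ei Hi _]].
by have := Hq i (EK Ei); rewrite leNgt Hi.
Qed.

End Climb.

Section Lin.
Variables (n r : nat) (al co : 'I_r -> 'rV[rat]_n).
Local Notation s := (srefl al co).
Local Notation wa := (wact al co).
Local Notation V := 'rV[rat]_n.

Lemma sD i (x y : V) : s i (x + y) = s i x + s i y.
Proof. rewrite !sE pairD; apply/rowP => k; rewrite !mxE; ring. Qed.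
Lemma sZ i c (x : V) : s i (c *: x) = c *: s i x.
Proof. rewrite !sE pairZ; apply/rowP => k; rewrite !mxE; ring. Qed.
Lemma s0 i : s i 0 = 0.
Proof. by rewrite sE pair0 scale0r subr0. Qed.
Lemma waD w (x y : V) : wa w (x + y) = wa w x + wa w y.
Proof. by elim: w => //= i w ->; rewrite sD. Qed.
Lemma waZ w c (x : V) : wa w (c *: x) = c *: wa w x.
Proof. by elim: w => //= i w ->; rewrite sZ. Qed.
Lemma wa0 w : wa w 0 = 0.
Proof. by elim: w => //= i w ->; rewrite s0. Qed.
Lemma wa_sum w I (l : seq I) (P : pred I) (F : I -> V) :
  wa w (\sum_(k <- l | P k) F k) = \sum_(k <- l | P k) wa w (F k).
Proof.
elim/big_rec2: _ => [|k a b _ H]; first by rewrite wa0.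
by rewrite waD H.
Qed.

Definition mat w : 'M[rat]_n := \matrix_(i < n, j < n) (wa w (delta_mx 0 i)) ord0 j.

Lemma waM w (x : V) : wa w x = x *m mat w.
Proof.
rewrite {1}(row_sum_delta x) wa_sum; apply/rowP => j.
rewrite summxE !mxE; apply: eq_bigr => k _; rewrite waZ !mxE.
by [].
Qed.

Lemma mat_eq w1 w2 : (forall x, wa w1 x = wa w2 x) -> mat w1 = mat w2.
Proof. by move=> H; apply/matrixP => i j; rewrite !mxE H. Qed.

Lemma mat_cons i w : mat (i :: w) = mat w *m mat [:: i].
Proof.
by apply/row_matrixP => k; rewrite !rowE mulmxA -!waM.
Qed.
End Lin.

Lemma conv_avg n (S : 'rV[rat]_n -> Prop) : convex S ->
  forall l : seq 'rV[rat]_n, l != [::] -> (forall v, v \in l -> S v) ->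
  S ((size l)%:R^-1 *: \sum_(v <- l) v).
Proof.
move=> HS; elim=> // a l IH _ Hl.
case: (eqVneq l [::]) => [->|ln].
  by rewrite big_cons big_nil addr0 /= invr1 scale1r; apply: Hl; rewrite inE eqxx.
have Sa : S a by apply: Hl; rewrite inE eqxx.
have Sl : S ((size l)%:R^-1 *: \sum_(v <- l) v).
  by apply: IH => // v vl; apply: Hl; rewrite inE vl orbT.
have kpos : 0 < (size l)%:R :> rat by rewrite ltr0n lt0n size_eq0.
set k := (size l)%:R : rat in kpos Sl.
have -> : (size (a :: l))%:R^-1 *: \sum_(v <- a :: l) v =
   (k + 1)^-1 *: a + (1 - (k + 1)^-1) *: (k^-1 *: \sum_(v <- l) v).
  rewrite big_cons /= -natr1 -/k; apply/rowP => j; rewrite !mxE.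
  field; lra.
apply: HS => //; apply/andP; split.
  by rewrite invr_ge0; lra.
by rewrite invf_le1; lra.
Qed.


Lemma sum_const_seq T (l : seq T) (a : rat) : \sum_(M <- l) a = a * (size l)%:R.
Proof. elim: l => [|b l IH]; first by rewrite big_nil mulr0.
by rewrite big_cons IH /= -natr1; ring. Qed.

Lemma sum_ge_seq (T : eqType) (l : seq T) (f : T -> rat) (a : rat) :
  (forall M, M \in l -> a <= f M) -> a * (size l)%:R <= \sum_(M <- l) f M.
Proof.
elim: l => [|b l IH] H; first by rewrite big_nil mulr0.
rewrite big_cons /= -natr1 mulrDr mulr1 addrC lerD //.
  by apply: H; rewrite inE eqxx.
by apply: IH => M Ml; apply: H; rewrite inE Ml orbT.
Qed.

Lemma mat_ii n r (al co : 'I_r -> 'rV[rat]_n) (Hdiag : forall i, pair (al i) (co i) = 2)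
  i (M : 'M[rat]_n) : M *m mat al co [:: i] *m mat al co [:: i] = M.
Proof. by apply/row_matrixP => k; rewrite !row_mul -!waM /= s_invol. Qed.

Theorem lemma7p4 (n r : nat) (alpha coalpha : 'I_r -> 'rV[rat]_n)
  (B : 'M[rat]_n) (Sigma : seq (seq 'rV[rat]_n)) :
  reductive_root_datum alpha coalpha ->
  W_invariant_inner_product alpha coalpha B ->
  is_fan Sigma ->
  (forall x, fan_support Sigma x -> chamber alpha x) ->
  convex (W_support alpha coalpha Sigma) ->
  forall (x : 'rV[rat]_n) (F : 'rV[rat]_n -> Prop) (p : 'rV[rat]_n),
    fan_support Sigma x ->
    is_face (chamber alpha) F ->
    orth_proj B (lin_span F) x p ->
    fan_support Sigma p.
Proof.
move=> [Hintg Hdiag Hoff Hsym0 Hfin] [HBs HBpos HBinv] _ Hch Hconv x F p Hx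
  [phi [Hphi HFe]] [Hpspan Hport].
have Hint : forall i j, pair (alpha i) (coalpha j) \is a Num.int.
  by move=> i j; apply: pair_int; [exact: (Hintg i).1 | exact: (Hintg j).2].
have Cx : chamber alpha x := Hch x Hx.
pose K := fun i => pb (forall f, F f -> pair (alpha i) f = 0).
have [ws Hws] := Hfin.
pose mt := mat alpha coalpha.
pose T := [seq mt w | w <- ws].
pose S := filter (fun M => pb (exists w, all K w /\ M = mt w)) (undup T).
have Suniq : uniq S by rewrite filter_uniq // undup_uniq.
have S2 : forall M, M \in S -> exists w, all K w /\ M = mt w.
  by move=> M; rewrite mem_filter => /andP[/pbP].
have S3 : forall w, all K w -> mt w \in S.
  move=> w Kw; have [w' w'in Hw'] := Hws w; rewrite mem_filter mem_undup.
  apply/andP; split; first by apply/pbP; exists w.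
  by apply/mapP; exists w' => //; apply: mat_eq.
have Sne : S != [::].
  by apply/eqP => HS; have := S3 [::] isT; rewrite HS.
have Hperm : forall i, K i -> perm_eq S [seq M *m mt [:: i] | M <- S].
  move=> i Ki; apply: uniq_perm => //.
    rewrite map_inj_in_uniq // => M1 M2 _ _ HM.
    by rewrite -(mat_ii Hdiag i M1) HM mat_ii.
  move=> M; apply/idP/idP => HM.
    have [w [Kw ->]] := S2 M HM.
    apply/mapP; exists (mt w *m mt [:: i]); last by rewrite mat_ii.
    by rewrite -mat_cons; apply: S3; rewrite /= Ki.
  case/mapP: HM => M' /S2 [w [Kw ->]] ->.
  by rewrite -mat_cons; apply: S3; rewrite /= Ki.
pose c := (size S)%:R^-1 : rat.
pose avg := c *: \sum_(M <- S) x *m M.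
have Hfix : forall i, K i -> srefl alpha coalpha i avg = avg.
  move=> i Ki; have -> : srefl alpha coalpha i avg = wact alpha coalpha [:: i] avg by [].
  rewrite waM /avg -scalemxAl mulmx_suml.
  under eq_bigr do rewrite -mulmxA.
  rewrite -(big_map (fun M => M *m mt [:: i]) xpredT (fun M => x *m M)).
  by congr (_ *: _); apply: perm_big; rewrite perm_sym; exact: Hperm.
have HK0 : forall i, K i -> pair (alpha i) avg = 0.
  move=> i Ki; have := congr1 (pair (alpha i)) (Hfix i Ki).
  rewrite sE pairB pairZ Hdiag; lra.
have sp : 0 < (size S)%:R :> rat by rewrite ltr0n lt0n size_eq0.
have Hdom : forall j, ~~ K j -> pair (alpha j) x <= pair (alpha j) avg.
  move=> j Kj; rewrite /avg pairZ pair_sum.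
  have : pair (alpha j) x * (size S)%:R <= \sum_(M <- S) pair (alpha j) (x *m M).
    apply: sum_ge_seq => M /S2 [w [Kw ->]]; rewrite -waM.
    apply: (dominance Hdiag Hoff Hsym0 Hint HBs HBpos HBinv Hfin (K := K)) => // i _; exact: Cx.
  rewrite /c; move: (\sum_(M <- S) _) => Z H.
  rewrite ler_pdivlMl // mulrC //.
have Cavg : chamber alpha avg.
  move=> i; case Ki: (K i); first by rewrite HK0 ?Ki.
  by apply: le_trans (Cx i) (Hdom i _); rewrite Ki.
have Wavg : W_support alpha coalpha Sigma avg.
  have := @conv_avg _ _ Hconv [seq x *m M | M <- S].
  rewrite size_map big_map => H; apply: H.
    by case: (S) Sne.
  move=> v /mapP [M /S2 [w [Kw ->]] ->]; exists w; exists x => //; by rewrite waM.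
have HspanK : forall y, lin_span F y -> forall i, K i -> pair (alpha i) y = 0.
  move=> y [m [cf [v [Hv ->]]]] i Ki; rewrite pair_sum big1 // => k _; rewrite pairZ.
  by move/pbP: Ki => /(_ _ (Hv k)) ->; rewrite mulr0.
have HortF : forall y, lin_span F y -> ip B (x - avg) y = 0.
  move=> y Hy; rewrite ipBl /avg ipZl ip_suml.
  have -> : \sum_(M <- S) ip B (x *m M) y = ip B x y * (size S)%:R.
    rewrite -sum_const_seq; apply: eq_big_seq => M /S2 [w [Kw ->]].
    rewrite -waM; apply: ip_wact_fix => // i iw.
    by apply: HspanK => //; move/allP: Kw; apply.
  rewrite /c; field; exact: lt0r_neq0.
have Fadd : forall u v, F u -> F v -> F (u + v).
  move=> u v /HFe [Cu Pu] /HFe [Cv Pv]; apply/HFe; split.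
    by move=> i; rewrite pairD addr_ge0.
  by rewrite pairD Pu Pv addr0.
have F0 : F 0 by apply/HFe; split; [move=> i; rewrite pair0 | rewrite pair0].
have [f0 [Ff0 Hf0]] : exists f0, F f0 /\ forall j, ~~ K j -> 0 < pair (alpha j) f0.
  suff : forall l : seq 'I_r, exists f0, F f0 /\
      forall j, j \in l -> ~~ K j -> 0 < pair (alpha j) f0.
    by case/(_ (enum 'I_r)) => f0 [H1 H2]; exists f0; split => // j; apply: H2; rewrite mem_enum.
  elim=> [|i l [f1 [Ff1 H1]]]; first by exists 0.
  case Ki: (K i).
    by exists f1; split => // j; rewrite inE => /orP[/eqP->|jl]; [rewrite Ki | exact: H1].
  have [g [Fg Hg]] : exists g, F g /\ pair (alpha i) g != 0.
    move: Ki; rewrite /K; case: pbP => // HP _.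
    apply: NNPP => Hn; apply: HP => f Ff; apply/eqP; apply: contraT => Hf.
    by case: Hn; exists f.
  have Cg : chamber alpha g by case/HFe: Fg.
  have Cf1 : chamber alpha f1 by case/HFe: Ff1.
  have gpos : 0 < pair (alpha i) g by rewrite lt_def Hg Cg.
  exists (f1 + g); split; first exact: Fadd.
  move=> j; rewrite inE => /orP[/eqP->|jl] Kj; rewrite pairD.
    by have := Cf1 i; lra.
  by have := H1 j jl Kj; have := Cg j; lra.
pose N := \sum_(j | ~~ K j) pair (alpha j) avg / pair (alpha j) f0.
have HN : forall j, ~~ K j -> pair (alpha j) avg <= N * pair (alpha j) f0.
  move=> j Kj; rewrite /N (bigD1 j) //=.
  have Hr : 0 <= \sum_(k | ~~ K k && (k != j)) pair (alpha k) avg / pair (alpha k) f0.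
    apply: sumr_ge0 => k /andP[Kk _]; apply: divr_ge0; [exact: Cavg | exact: ltW (Hf0 k Kk)].
  have hf := Hf0 j Kj.
  rewrite mulrDl divfK ?(gt_eqF hf) // lerDl; exact: mulr_ge0 Hr (ltW hf).
have Fav : F avg.
  apply/HFe; split => //.
  have Cv : chamber alpha (N *: f0 - avg).
    move=> i; rewrite pairB pairZ; case Ki: (K i).
      by move/pbP: (Ki) => /(_ _ Ff0) ->; rewrite HK0 ?Ki // mulr0 subr0.
    by rewrite subr_ge0; apply: HN; rewrite Ki.
  have := Hphi _ Cv; rewrite pairB pairZ.
  have P0 : pair phi f0 = 0 by case/HFe: Ff0.
  rewrite P0 mulr0 sub0r oppr_ge0 => H; apply: le_anti; rewrite H Hphi //.
have Sav : lin_span F avg.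
  exists 1%N, (fun _ => 1), (fun _ => avg); split => //; by rewrite big_ord1 scale1r.
have Hpa : p = avg.
  have Hd : forall y, lin_span F y -> ip B (p - avg) y = 0.
    move=> y Hy; have -> : p - avg = (x - avg) - (x - p).
      by apply/rowP => k; rewrite !mxE; ring.
    by rewrite ipBl HortF // Hport // subr0.
  apply/eqP; rewrite -subr_eq0; apply/eqP; apply: (ip_eq0 HBpos).
  by rewrite (ipBr HBs) Hd // Hd // subr0.
rewrite Hpa; case: Wavg => w [y Hy Hwy].
have Cy := Hch y Hy.
have : wact alpha coalpha w y = y.
  apply: (dom_unique Hdiag Hoff Hsym0 Hint HBs HBpos HBinv Hfin (K := predT)).
  - by move=> i _; apply: Cy.
  - by rewrite -Hwy => i _; apply: Cavg.
  - by apply/allP.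
by rewrite -Hwy => ->.
Qed.
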